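(* For every positive integer $k$, \[ \sum_{i+t\le k}B_{2t}\,2^{2t}\binom{2k+2}{2t,\;2i+1,\;2k-2t-2i+1}=2^{2k+1}(k+1), \] where the sum ranges over all pairs of nonnegative integers $i,t$ with $i+t\le k$.
   Context: The Bernoulli numbers $B_m$ ($m\ge 0$) are defined by $\dfrac{x}{e^x-1}=\sum_{m=0}^\infty B_m\dfrac{x^m}{m!}$. The trinomial coefficient is $\binom{n}{r_1,r_2,r_3}=\dfrac{n!}{r_1!\,r_2!\,r_3!}$ for nonnegative integers $r_1+r_2+r_3=n$. *)

(* Defs.v *)
From HB Require Import structures.
From mathcomp Require Import all_boot all_order all_algebra.
Set Implicit Arguments. Unset Strict Implicit. Unset Printing Implicit Defensive.
Import Order.TTheory GRing.Theory Num.Theory.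
Local Open Scope ring_scope.

(* Bernoulli numbers B_0, ..., B_n (as rationals), via the coefficient
   identity of x = (e^x - 1) * (sum_m B_m x^m/m!):
   for m >= 1, sum_{j=0}^{m} C(m+1,j) B_j = 0, and B_0 = 1.
   (Convention B_1 = -1/2, matching x/(e^x-1).) *)
Fixpoint bern_seq (n : nat) : seq rat :=
  match n with
  | 0 => [:: 1]
  | n'.+1 =>
      let s := bern_seq n' in
      rcons s (- (\sum_(j < n'.+1) ('C(n'.+2, j))%:R * s`_j) / (n'.+2)%:R)
  end.

Definition bernoulli (m : nat) : rat := (bern_seq m)`_m.

(* trinomial coefficient n!/(r1! r2! r3!) (used only with r1+r2+r3 = n) *)
Definition trinomial (n r1 r2 r3 : nat) : nat :=
  (n`! %/ (r1`! * r2`! * r3`!))%N.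

(* Main.v *)
Require Import Defs.
From HB Require Import structures.
From mathcomp Require Import all_boot all_order all_algebra.
From mathcomp Require Import ring lra zify.
Import Order.TTheory GRing.Theory Num.Theory.
Local Open Scope ring_scope.

Lemma size_bern n : size (bern_seq n) = n.+1.
Proof. by elim: n => [|n IH] //=; rewrite size_rcons IH. Qed.

Lemma bern_nth n j : (j <= n)%N -> (bern_seq n)`_j = bernoulli j.
Proof.
elim: n => [|n IH]; first by rewrite leqn0 => /eqP ->.
rewrite leq_eqVlt => /orP [/eqP -> //| Hj].
by rewrite /= nth_rcons size_bern Hj IH.
Qed.

Lemma bernS n : bernoulli n.+1 =
  - (\sum_(j < n.+1) ('C(n.+2, j))%:R * bernoulli j) / (n.+2)%:R.
Proof.
rewrite /bernoulli /= nth_rcons size_bern ltnn eqxx.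
congr (- _ / _); apply: eq_bigr => j _; by rewrite bern_nth // -ltnS.
Qed.

Lemma bern_rec n : \sum_(j < n) ('C(n, j))%:R * bernoulli j = (n == 1%N)%:R.
Proof.
case: n => [|[|n]]; first by rewrite big_ord0.
  by rewrite big_ord1 mul1r.
rewrite big_ord_recr /= binSn bernS.
set S := \sum_(_ < _) _.
have h : (n.+2)%:R != 0 :> rat by rewrite pnatr_eq0.
field.
have := ler0n rat n; lra.
Qed.


Lemma big_pairs (R : Type) (idx : R) (op : Monoid.com_law idx) N (f : nat -> R) :
  \big[op/idx]_(j < 2 * N) f j = \big[op/idx]_(i < N) op (f (2 * i)%N) (f (2 * i).+1).
Proof.
elim: N => [|N IH]; first by rewrite !big_ord0.
rewrite (_ : (2 * N.+1 = (2 * N).+2)%N); last by rewrite mulnS add2n.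
by rewrite !big_ord_recr /= IH Monoid.mulmA.
Qed.

Lemma binCC n m j : (j <= m)%N -> (m <= n)%N ->
  ('C(n, m) * 'C(m, j) = 'C(n, j) * 'C(n - j, m - j))%N.
Proof.
move=> hjm hmn.
apply/eqP; rewrite -(@eqn_pmul2r (j`! * (m - j)`! * (n - m)`!)); last first.
  by rewrite !muln_gt0 !fact_gt0.
have e1 : (n - j - (m - j) = n - m)%N by lia.
have F1 := bin_fact hmn.
have F2 := bin_fact hjm.
have F3 : ('C(n, j) * (j`! * (n - j)`!) = n`!)%N by apply: bin_fact; lia.
have F4 : ('C(n - j, m - j) * ((m - j)`! * (n - m)`!) = (n - j)`!)%N.
  by rewrite -e1 bin_fact //; lia.
apply/eqP.
transitivity ('C(n, m) * (('C(m, j) * (j`! * (m - j)`!)) * (n - m)`!))%N; first by ring.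
rewrite F2 F1.
transitivity ('C(n, j) * (j`! * ('C(n - j, m - j) * ((m - j)`! * (n - m)`!))))%N; last by ring.
by rewrite F4 F3.
Qed.

Lemma alt_binom N : (0 < N)%N ->
  \sum_(m < N) ('C(N, m.+1))%:R * (-1) ^+ m.+1 = -1 :> rat.
Proof.
move=> hN; have := exprBn (1:rat) 1 N.
rewrite subrr expr0n (gtn_eqF hN) big_ord_recl /= !expr1n !expr0 bin0 !mulr1 mulr1n.
set S := \sum_(i < N) _.
set T := \sum_(i < N) _.
have -> : T = S.
  apply: eq_bigr => i _; rewrite /bump /= add1n !expr1n !mulr1 mulrC mulr_natr //.
move=> h; lra.
Qed.

Lemma bern_alt n :
  \sum_(j < n) ('C(n, j))%:R * ((-1) ^+ j * bernoulli j) = n%:R.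
Proof.
pose G (m j : nat) : rat := ('C(n, m))%:R * (-1) ^+ m * (('C(m, j))%:R * bernoulli j).
pose X := \sum_(m < n.+1) ('C(n, m))%:R * (-1) ^+ m *
             (\sum_(j < m) ('C(m, j))%:R * bernoulli j).
have Xa : X = - n%:R.
  rewrite /X; under eq_bigr => m _ do rewrite bern_rec.
  case: n {G X} => [|p]; first by rewrite big_ord1 mulr0 oppr0.
  rewrite big_ord_recl big_ord_recl big1 /=; last first.
    by move=> i _; rewrite /bump /= mulr0.
  by rewrite mulr0 expr1 bin1 !mulr1 add0r addr0 mulrN1.
have Xb : X = - \sum_(j < n) ('C(n, j))%:R * ((-1) ^+ j * bernoulli j).
  have -> : X = \sum_(m < n.+1) \sum_(j < n | (j < m)%N) G m j.
    apply: eq_bigr => m _; rewrite mulr_sumr (big_ord_widen n (fun j => G m j)) //.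
    by rewrite -ltnS.
  rewrite (exchange_big_dep xpredT) //= -sumrN.
  apply: eq_bigr => j _.
  rewrite -(big_mkord (fun m => (j < m)%N) (fun m => G m j)) (big_cat_nat _ (n := j.+1)) //=; last by rewrite ltnS ltnW.
  rewrite big_nat_cond big1 ?add0r; last first.
    by move=> m /andP [/andP [_ hm] hjm]; exfalso; lia.
  rewrite -{1}(add0n j.+1) big_addn subSS big_mkcond big_mkord.
  have hj : (j < n)%N := ltn_ord j.
  transitivity (('C(n, j))%:R * (-1) ^+ j * bernoulli j *
    \sum_(i < n - j) ('C(n - j, i.+1))%:R * (-1) ^+ i.+1).
    rewrite mulr_sumr; apply: eq_bigr => i _.
    have hi : (i < n - j)%N := ltn_ord i.
    rewrite (_ : (j < i + j.+1)%N = true); last by lia.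
    have hb := @binCC n (i + j.+1) j ltac:(lia) ltac:(lia).
    rewrite (_ : (i + j.+1 - j = i.+1)%N) in hb; last by lia.
    rewrite /G.
    transitivity (('C(n, i + j.+1) * 'C(i + j.+1, j))%:R * (-1) ^+ (i + j.+1) * bernoulli j).
      by rewrite natrM; ring.
    rewrite hb natrM (_ : (i + j.+1 = i.+1 + j)%N); last by lia.
    rewrite exprD; ring.
  rewrite alt_binom; last by lia.
  ring.
have : X = X by [].
rewrite {1}Xa Xb => h; lra.
Qed.

Lemma bern_sym m : (-1) ^+ m * bernoulli m = bernoulli m + (m == 1%N)%:R.
Proof.
elim/ltn_ind: m => m IH.
case: m IH => [|[|p]] IH.
- by rewrite expr0 mul1r addr0.
- have := bern_rec 2; rewrite big_ord_recl big_ord1 /=.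
  have b0 : bernoulli 0 = 1 by [].
  rewrite b0 /bump /= => h.
  rewrite addn0 bin0 bin1 mulr1 in h.
  rewrite expr1; lra.
- have e1 := bern_alt p.+3.
  have e2 := bern_rec p.+3.
  have e3 : \sum_(j < p.+3) ('C(p.+3, j))%:R * ((j:nat) == 1%N)%:R = (p.+3)%:R :> rat.
    rewrite big_ord_recl big_ord_recl big1 /=; last first.
      by move=> i _; rewrite /bump /= mulr0.
    by rewrite mulr0 bin1 mulr1 add0r addr0.
  have e4 : \sum_(j < p.+2) ('C(p.+3, j))%:R * ((-1) ^+ j * bernoulli j) =
     \sum_(j < p.+2) ('C(p.+3, j))%:R * bernoulli j +
     \sum_(j < p.+2) ('C(p.+3, j))%:R * ((j:nat) == 1%N)%:R.
    rewrite -big_split /=; apply: eq_bigr => j _.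
    by rewrite IH ?mulrDr // ltnS ltnW.
  rewrite big_ord_recr /= e4 in e1.
  rewrite big_ord_recr /= in e2.
  rewrite big_ord_recr /= mulr0 addr0 in e3.
  rewrite binSn in e1 e2.
  have hc : (p.+3)%:R != 0 :> rat by rewrite pnatr_eq0.
  have : (p.+3)%:R * ((-1) ^+ p.+2 * bernoulli p.+2 - bernoulli p.+2) = 0 :> rat.
    rewrite mulrBr e3 in e1 *.
    set S := \sum_(j < p.+2) _ in e1.
    rewrite (_ : \sum_(i < p.+2) 'C(p.+3, i)%:R * bernoulli i = S) in e2; last by [].
    lra.
  move/eqP; rewrite mulf_eq0 (negbTE hc) /= subr_eq0 => /eqP ->.
  by rewrite addr0.
Qed.

Lemma bern_odd i : bernoulli (2 * i).+1 = if i == 0%N then - 1/2 else 0.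
Proof.
have := bern_sym (2 * i).+1.
rewrite exprS exprM sqrrN expr1n mulr1.
case: i => [|i] /= h; lra.
Qed.

Lemma bern_even k :
  \sum_(t < k.+1) ('C(2 * k.+1, 2 * t))%:R * bernoulli (2 * t) = (k.+1)%:R.
Proof.
have := bern_rec (2 * k.+1).
rewrite (big_pairs _ _ _ _ (fun j => ('C(2 * k.+1, j))%:R * bernoulli j)) big_split /=.
rewrite [X in _ + X = _]big_ord_recl [X in _ + (_ + X) = _]big1 /=; last first.
  by move=> i _; rewrite bern_odd /bump /= mulr0.
rewrite bern_odd /= bin1 addr0.
rewrite (_ : (2 * k.+1 == 1%N) = false); last by apply/negbTE/eqP; lia.
set S := \sum_(i < k.+1) _.
rewrite mulnS natrD.
move=> h.
change (S = (k.+1)%:R).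
rewrite natrM (_ : false%:R = 0 :> rat) // in h.
rewrite -natr1; lra.
Qed.


Lemma tri_eq n a b : (a + b <= n)%N ->
  (n`! %/ (a`! * b`! * (n - a - b)`!) = 'C(n, a) * 'C(n - a, b))%N.
Proof.
move=> h.
have F1 : ('C(n, a) * (a`! * (n - a)`!) = n`!)%N by apply: bin_fact; lia.
have F2 : ('C(n - a, b) * (b`! * (n - a - b)`!) = (n - a)`!)%N by apply: bin_fact; lia.
have -> : n`! = ('C(n, a) * 'C(n - a, b) * (a`! * b`! * (n - a - b)`!))%N.
  rewrite -F1 -F2.
  move: ('C(n, a)) ('C(n - a, b)) (a`!) (b`!) ((n - a - b)`!) => x y z u v; ring.
by rewrite mulnK // !muln_gt0 !fact_gt0.
Qed.

Lemma odd_sum M : (\sum_(i < M.+1) 'C(2 * M + 2, 2 * i + 1) = 2 ^ (2 * M + 1))%N.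
Proof.
have e : (2 * M + 2 = (2 * M + 1).+1)%N by lia.
rewrite e.
transitivity (\sum_(i < M.+1) ('C(2 * M + 1, 2 * i) + 'C(2 * M + 1, (2 * i).+1)))%N.
  by apply: eq_bigr => i _; rewrite [(2 * i + 1)%N]addn1 binS addnC.
rewrite -(big_pairs _ _ _ _ (fun j => 'C(2 * M + 1, j))).
have := expnDn 1 1 (2 * M + 1).
rewrite (_ : (2 * M.+1 = (2 * M + 1).+1)%N); last by lia.
move=> ->; apply: eq_bigr => i _; rewrite !exp1n !muln1 //.
Qed.

Theorem mainTheorem3 (k : nat) (hk : (0 < k)%N) :
  \sum_(t < k.+1) \sum_(i < k.+1 | (i + t <= k)%N)
     bernoulli (2 * t) * 2%:R ^+ (2 * t)
       * (trinomial (2 * k + 2) (2 * t) (2 * i + 1) (2 * k - 2 * t - 2 * i + 1))%:R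
  = 2%:R ^+ (2 * k + 1) * (k.+1)%:R.
Proof.
transitivity (\sum_(t < k.+1) 2%:R ^+ (2 * k + 1) *
   (('C(2 * k.+1, 2 * t))%:R * bernoulli (2 * t))); last first.
  by rewrite -mulr_sumr bern_even.
apply: eq_bigr => t _.
have ht : (t <= k)%N by rewrite -ltnS.
transitivity (\sum_(i < (k - t).+1) bernoulli (2 * t) * 2%:R ^+ (2 * t)
   * ('C(2 * k.+1, 2 * t))%:R * ('C(2 * (k - t) + 2, 2 * i + 1))%:R).
  rewrite (big_ord_widen k.+1 (fun i : nat => bernoulli (2 * t) * 2%:R ^+ (2 * t)
   * ('C(2 * k.+1, 2 * t))%:R * ('C(2 * (k - t) + 2, 2 * i + 1))%:R)); last by lia.
  apply: eq_big => i; first by rewrite /=; lia.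
  move=> hi; rewrite /trinomial.
  rewrite (_ : (2 * k - 2 * t - 2 * i + 1 = 2 * k + 2 - 2 * t - (2 * i + 1))%N); last by lia.
  rewrite tri_eq; last by lia.
  rewrite (_ : (2 * k + 2 - 2 * t = 2 * (k - t) + 2)%N); last by lia.
  rewrite (_ : (2 * k + 2 = 2 * k.+1)%N); last by lia.
  by rewrite natrM mulrA.
rewrite -mulr_sumr -natr_sum odd_sum.
rewrite natrX.
rewrite (_ : (2 * k + 1 = 2 * t + (2 * (k - t) + 1))%N); last by lia.
rewrite !exprD; ring.
Qed.
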